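(* Let $\mathcal{R}$ be a fusion ring with basis $\{x_1=1,\ldots,x_m\}$ and fusion matrices $M_j$. Then the primary $1$-matrix is positive semidefinite: \[ \sum_{j=1}^m\|M_j\|\,M_j\geq 0. \]
   Context: A fusion ring is a ring $\mathcal{R}$ which is a free $\mathbb{Z}$-module with a finite basis $\{x_1=1,\ldots,x_m\}$ such that $x_ix_j=\sum_k N_{ij}^k x_k$ with $N_{ij}^k\in\mathbb{N}$; there is an involution $i\mapsto i^*$ whose $\mathbb{Z}$-linear extension is an anti-involution of $\mathcal{R}$; and the coefficient of $x_1$ in $x_ix_j$ equals $\delta_{i,j^*}$. The fusion matrix of $x_j$ is $(M_j)_{k,i}=N_{ji}^k$ and $\|M_j\|$ is its operator norm on $\mathbb{C}^m$. *)

(* Defs.v *)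
From HB Require Import structures.
From mathcomp Require Import all_boot all_order all_algebra.
From mathcomp Require Import boolp classical_sets reals.
From mathcomp Require Import complex.
Set Implicit Arguments. Unset Strict Implicit. Unset Printing Implicit Defensive.
Import Order.TTheory GRing.Theory Num.Theory.
Local Open Scope ring_scope.
Local Open Scope complex_scope.

(* A fusion ring with basis x_0 = 1, x_1, ..., x_m (indexed by 'I_m.+1,
   the unit being ord0); structure constants N i j k = N_{ij}^k, i.e.
   x_i x_j = \sum_k N i j k x_k. *)
Record fusion_ring (m : nat) := FusionRing {
  fr_N : 'I_m.+1 -> 'I_m.+1 -> 'I_m.+1 -> nat;
  fr_dual : 'I_m.+1 -> 'I_m.+1;
  fr_assoc : forall i j k l,
    (\sum_(p < m.+1) fr_N i j p * fr_N p k l =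
     \sum_(p < m.+1) fr_N j k p * fr_N i p l)%N;
  fr_unitl : forall j k, fr_N ord0 j k = (j == k) :> nat;
  fr_unitr : forall j k, fr_N j ord0 k = (j == k) :> nat;
  fr_dualK : forall i, fr_dual (fr_dual i) = i;
  (* its Z-linear extension is an anti-involution of the ring:
     (x_i x_j)^* = x_j^* x_i^*  and  1^* = 1 *)
  fr_dual_anti : forall i j k,
    fr_N i j k = fr_N (fr_dual j) (fr_dual i) (fr_dual k);
  fr_dual1 : fr_dual ord0 = ord0;
  fr_rigid : forall i j, fr_N i j ord0 = (i == fr_dual j) :> nat
}.

Definition fusion_matrix (R : realType) m (F : fusion_ring m) (j : 'I_m.+1)
  : 'M[complex R]_m.+1 :=
  \matrix_(k, l) ((fr_N F j l k)%:R).

Definition cvnorm (R : realType) n (v : 'cV[complex R]_n) : R :=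
  Num.sqrt (complex.Re (\sum_(k < n) `|v k ord0| ^+ 2)).

Definition opnorm (R : realType) n (A : 'M[complex R]_n) : R :=
  reals.sup [set r : R | exists v : 'cV[complex R]_n,
                           cvnorm v <= 1 /\ r = cvnorm (A *m v)]%classic.

(* Positive semidefinite complex matrix: v^* A v >= 0 for all v in C^n
   (the order on complex R means: real and nonnegative). *)
Definition psd (R : realType) n (A : 'M[complex R]_n) : Prop :=
  forall v : 'cV[complex R]_n, 0 <= ((map_mx Num.conj v)^T *m A *m v) ord0 ord0.

(* Main.v *)
Require Import Defs.
From HB Require Import structures.
From mathcomp Require Import all_boot all_order all_algebra.
From mathcomp Require Import boolp classical_sets reals.
From mathcomp Require Import complex.
From mathcomp Require Import ring lra.
Import Order.TTheory GRing.Theory Num.Theory.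
Local Open Scope ring_scope.
Module PA.
Set Implicit Arguments. Unset Strict Implicit. Unset Printing Implicit Defensive.

Lemma sum_delta_nat n (f : 'I_n -> nat) (a : 'I_n) :
  (\sum_(p < n) f p * (p == a) = f a)%N.
Proof.
rewrite (bigD1 a) //= eqxx muln1 big1 ?addn0 //.
by move=> p /negbTE ->; rewrite muln0.
Qed.

Section FR.
Variables (m : nat) (F : fusion_ring m).
Local Notation N := (fr_N F).
Local Notation du := (fr_dual F).

Lemma duK i : du (du i) = i. Proof. exact: fr_dualK. Qed.

Lemma du_inj : injective du. Proof. exact: (can_inj duK). Qed.

Lemma N_cyc i j k : N i j (du k) = N j k (du i).
Proof.
have H := fr_assoc F i j k ord0.
have E1 : (\sum_(p < m.+1) N i j p * N p k ord0 = \sum_(p < m.+1) N i j p * (p == du k))%N.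
  by apply: eq_bigr => p _; rewrite fr_rigid.
have E2 : (\sum_(p < m.+1) N j k p * N i p ord0 = \sum_(p < m.+1) N j k p * (p == du i))%N.
  apply: eq_bigr => p _; rewrite fr_rigid; congr (_ * nat_of_bool _)%N.
  by apply/eqP/eqP => [->|->]; rewrite duK.
by rewrite E1 E2 !sum_delta_nat in H.
Qed.

Lemma N_frob j k i : N (du j) k i = N j i k.
Proof.
rewrite -{1}(duK i) N_cyc -{1}(duK k) N_cyc duK.
by rewrite fr_dual_anti !duK.
Qed.

Lemma N_rfrob k j i : N k (du j) i = N i j k.
Proof.
rewrite fr_dual_anti duK -{1}(duK j) N_frob.
by rewrite [LHS]fr_dual_anti !duK.
Qed.
End FR.

End PA.
Import PA.

Module PB.
Set Implicit Arguments. Unset Strict Implicit. Unset Printing Implicit Defensive.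
Local Open Scope sesquilinear_scope.

Section Perron.
Variable R : realType.
Local Notation C := (complex R).
Local Notation toC := (real_complex R).

Variable n : nat.
Variable T : 'M[R]_n.+1.
Hypothesis Tsym : forall i j, T i j = T j i.
Hypothesis Tge0 : forall i j, 0 <= T i j.

Let Tc : 'M[C]_n.+1 := map_mx toC T.

Lemma Tc_sym : Tc \is symmetricmx.
Proof.
apply/is_hermitianmxP; rewrite expr0 scale1r; apply/matrixP => i j.
by rewrite !mxE Tsym.
Qed.

Lemma Tc_real : Tc \is a realmx.
Proof.
apply/mxOverP => i j; rewrite mxE; apply/complex_realP; by exists (T i j).
Qed.


Let Tn : Tc \is normalmx := symmetric_normalmx Tc_sym Tc_real.
Let P := spectralmx Tc.
Let s := spectral_diag Tc.
Lemma TE : Tc = invmx P *m diag_mx s *m P.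
Proof. exact/orthomx_spectralP. Qed.
Lemma Pu : P \is unitarymx. Proof. exact: spectral_unitarymx. Qed.
Lemma iP : invmx P = P^t*. Proof. exact: invmx_unitary Pu. Qed.
Lemma PPt : P *m P^t* = 1%:M. Proof. exact/unitarymxP/Pu. Qed.
Lemma PtP : P^t* *m P = 1%:M.
Proof. by rewrite -iP mulVmx // unitarymx_unit // Pu. Qed.
Lemma sreal i : s 0 i \is Num.real.
Proof.
have := hermitian_spectral_diag_real (realsym_hermsym Tc_sym Tc_real).
by move=> /mxOverP; apply.
Qed.
Lemma sE i : s 0 i = toC (complex.Re (s 0 i)).
Proof. by rewrite RRe_real // sreal. Qed.

Let i0 := [arg max_(i > ord0) complex.Re (s 0 i)]%O.
Let lam := complex.Re (s 0 i0).
Lemma smax i : complex.Re (s 0 i) <= lam.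
Proof. rewrite /lam /i0; case: arg_maxP => // j _ H; exact: H. Qed.


Let e : 'cV[C]_n.+1 := delta_mx i0 0.
Let w := P^t* *m e.

Lemma diag_e : diag_mx s *m e = s 0 i0 *: e.
Proof.
rewrite mul_diag_mx; apply/matrixP => i j; rewrite !mxE.
by case: eqP => [->|_] //=; rewrite !mulr0.
Qed.

Lemma Tw : Tc *m w = toC lam *: w.
Proof.
rewrite TE iP /w !mulmxA -[P^t* *m diag_mx s *m P *m P^t*]mulmxA PPt mulmx1.
by rewrite -mulmxA diag_e -scalemxAr sE.
Qed.

Lemma w_neq0 : w != 0.
Proof.
apply/eqP => w0.
have : P *m w = e by rewrite /w mulmxA PPt mul1mx.
rewrite w0 mulmx0 => /matrixP /(_ i0 0); rewrite !mxE !eqxx /=.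
by move/eqP; rewrite eq_sym oner_eq0.
Qed.

Definition Qf (x : 'cV[C]_n.+1) := (x^t* *m Tc *m x) 0 0.
Definition nrm (x : 'cV[C]_n.+1) := (x^t* *m x) 0 0.

Lemma tC_mul (x : 'cV[C]_n.+1) : x^t* *m P^t* = (P *m x)^t*.
Proof. by rewrite trmx_mul map_mxM. Qed.

Lemma QE x : Qf x = \sum_i ((P *m x) i 0)^* * s 0 i * (P *m x) i 0.
Proof.
rewrite /Qf TE iP !mulmxA.
have -> : x^t* *m P^t* = (P *m x)^t* by rewrite trmx_mul map_mxM.
rewrite mul_mx_diag -mulmxA.
rewrite mxE; apply: eq_bigr => i _; rewrite !mxE.
done.
Qed.

Lemma nrmE x : nrm x = \sum_i ((P *m x) i 0)^* * (P *m x) i 0.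
Proof.
have -> : nrm x = ((P *m x)^t* *m (P *m x)) 0 0.
  by rewrite /nrm trmx_mul map_mxM mulmxA -[_ *m P^t* *m P]mulmxA PtP mulmx1.
rewrite mxE; apply: eq_bigr => i _; rewrite !mxE.
done.
Qed.


Lemma eig_of_Q (x : 'cV[C]_n.+1) : toC lam * nrm x <= Qf x -> Tc *m x = toC lam *: x.
Proof.
move=> hQ; set y := P *m x.
have tge0 i : 0 <= (toC lam - s 0 i) * ((y i 0)^* * y i 0).
  apply: mulr_ge0; first by rewrite sE -rmorphB ler0c subr_ge0 smax.
  by rewrite mulrC mul_conjC_ge0.
have S0 : \sum_i (toC lam - s 0 i) * ((y i 0)^* * y i 0) = 0.
  apply/eqP; rewrite eq_le; apply/andP; split; last by apply: sumr_ge0 => i _.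
  have -> : \sum_i (toC lam - s 0 i) * ((y i 0)^* * y i 0) = toC lam * nrm x - Qf x.
    rewrite nrmE QE mulr_sumr -sumrB; apply: eq_bigr => i _.
    by rewrite /y; ring.
  by rewrite subr_le0.
have Dy : diag_mx s *m y = toC lam *: y.
  rewrite mul_diag_mx; apply/matrixP => i j; rewrite !mxE (ord1 j).
  have := @psumr_eq0P _ _ xpredT _ (fun i _ => tge0 i) S0 i isT.
  move/eqP; rewrite mulf_eq0 => /orP [|].
    by rewrite subr_eq0 => /eqP ->.
  rewrite mulf_eq0 conjC_eq0 orbb => /eqP E; rewrite /y mxE in E; by rewrite E !mulr0.
rewrite TE iP -!mulmxA -/y Dy -scalemxAr /y mulmxA PtP mul1mx //.
Qed.


Lemma QfE x : Qf x = \sum_b \sum_a (x a 0)^* * Tc a b * x b 0.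
Proof.
rewrite /Qf mxE; apply: eq_bigr => b _; rewrite mxE mulr_suml.
by apply: eq_bigr => a _; rewrite !mxE.
Qed.

Lemma nrmE2 x : nrm x = \sum_a (x a 0)^* * x a 0.
Proof. by rewrite /nrm mxE; apply: eq_bigr => a _; rewrite !mxE. Qed.

Let u : 'cV[C]_n.+1 := \col_k `|w k 0|.

Lemma conj_norm (z : C) : (`|z|)^* = `|z|.
Proof. by apply/CrealP; rewrite normr_real. Qed.

Lemma Tc_ge0 a b : 0 <= Tc a b.
Proof. by rewrite mxE ler0c. Qed.

Lemma u_Q : toC lam * nrm u <= Qf u.
Proof.
have Nuw : nrm u = nrm w.
  rewrite !nrmE2; apply: eq_bigr => a _; rewrite mxE conj_norm -expr2 normCKC.
  done.
have Qw : Qf w = toC lam * nrm w.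
  by rewrite /Qf -mulmxA Tw -scalemxAr mxE /nrm.
have nw0 : 0 <= nrm w by rewrite -Nuw nrmE2 sumr_ge0 // => a _; rewrite mulrC mul_conjC_ge0.
have lr : toC lam * nrm w \is Num.real.
  by rewrite realM ?(ger0_real nw0) //; apply/complex_realP; exists lam.
rewrite Nuw (le_trans (real_ler_norm lr)) // -Qw QfE.
rewrite (le_trans (ler_norm_sum _ _ _)) // QfE; apply: ler_sum => b _.
rewrite (le_trans (ler_norm_sum _ _ _)) //; apply: ler_sum => a _.
rewrite !mxE conj_norm !normrM norm_conjC ger0_norm ?ler0c //.

Qed.


Lemma perron_sym : exists l : R, exists ur : 'I_n.+1 -> R,
  [/\ (forall k, 0 <= ur k), (exists k, ur k != 0) &
      (forall k, \sum_i T k i * ur i = l * ur k)].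
Proof.
have ue := eig_of_Q u_Q.
pose r := fun k => complex.Re (u k 0).
have uR k : u k 0 = toC (r k).
  by rewrite RRe_real // mxE normr_real.
have r0 k : 0 <= r k by rewrite -ler0c -uR mxE normr_ge0.
have rn : exists k, r k != 0.
  case: (boolP [exists k, r k != 0]) => [/existsP //|/existsPn H].
  have : w != 0 := w_neq0.
  case/negP; apply/eqP/matrixP => k j; rewrite (ord1 j).
  have /negPn/eqP E := H k.
  have := uR k; rewrite E rmorph0 [u k 0]mxE => /eqP; rewrite normr_eq0 => /eqP Hw.
  by rewrite [(0 : 'cV[C]_n.+1) k 0]mxE; exact: Hw.
clearbody r.
exists lam, r; split => // k; apply: (@complexI R).
have /matrixP /(_ k 0) := ue.
rewrite [(Tc *m u) k 0]mxE [(_ *: u) k 0]mxE => E.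
rewrite rmorphM rmorph_sum /= -uR -E; apply: eq_bigr => i _.
by rewrite rmorphM /= uR [Tc k i]mxE.
Qed.

End Perron.

End PB.
Import PB.

Module PC.
Set Implicit Arguments. Unset Strict Implicit. Unset Printing Implicit Defensive.

Section FR2.
Variables (R : realType) (m : nat) (F : fusion_ring m).
Local Notation N := (fr_N F).
Local Notation du := (fr_dual F).
Local Notation I := ('I_m.+1).

Definition Tm : 'M[R]_m.+1 := \matrix_(k, i) (\sum_j N i j k)%:R.

Lemma Tm_sym i j : Tm i j = Tm j i.
Proof.
rewrite !mxE; congr (_%:R).
rewrite (reindex_inj (@du_inj _ F)) /=; apply: eq_bigr => p _.
by rewrite N_rfrob.
Qed.

Lemma Tm_ge0 i j : 0 <= Tm i j.
Proof. by rewrite mxE ler0n. Qed.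

Lemma Tm_pos k i : 0 < Tm k i.
Proof.
rewrite mxE ltr0n.
have H := fr_assoc F i (du i) k k.
have L : (0 < \sum_(p < m.+1) N i (du i) p * N p k k)%N.
  rewrite (bigD1 ord0) //= fr_rigid duK eqxx fr_unitl eqxx.
  by rewrite muln1 addnC addn1.
rewrite H in L.
case: (posnP (\sum_j N i j k)) => // S0.
have Z p : N i p k = 0%N.
  by move/eqP: S0; rewrite sum_nat_eq0 => /forallP /(_ p) /implyP /(_ isT) /eqP.
by move: L; rewrite big1 // => p _; rewrite Z muln0.
Qed.


Lemma perron_pos : exists lam : R, exists v : I -> R,
  (forall k, 0 < v k) /\ (forall k, \sum_i Tm k i * v i = lam * v k).
Proof.
have [l [u [u0 [k0 uk0] ue]]] := perron_sym Tm_sym Tm_ge0.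
exists l, u; split => // k.
have P : 0 < \sum_i Tm k i * u i.
  rewrite (bigD1 k0) //=.
  have h1 : 0 <= \sum_(i | i != k0) Tm k i * u i.
    by apply: sumr_ge0 => i _; rewrite mulr_ge0 ?Tm_ge0.
  have h2 : 0 < Tm k k0 * u k0.
    by rewrite mulr_gt0 ?Tm_pos // lt_neqAle eq_sym uk0 u0.
  lra.
rewrite lt_neqAle u0 andbT; apply/eqP => uk.
by move: P; rewrite ue -uk mulr0 ltxx.
Qed.

Definition NR a b k : R := (N a b k)%:R.
Definition Lm a : 'M[R]_m.+1 := \matrix_(k, b) NR a b k.
Definition Rm j : 'M[R]_m.+1 := \matrix_(k, i) NR i j k.

Lemma NR_ge0 a b k : 0 <= NR a b k. Proof. by rewrite /NR ler0n. Qed.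

Lemma assocR a b c d :
  \sum_p NR a b p * NR p c d = \sum_p NR b c p * NR a p d.
Proof.
rewrite /NR; under eq_bigr do rewrite -natrM.
under [RHS]eq_bigr do rewrite -natrM.
by rewrite -!natr_sum fr_assoc.
Qed.

Lemma Tm_sum : Tm = \sum_j Rm j.
Proof.
apply/matrixP => k i; rewrite !mxE summxE natr_sum; apply: eq_bigr => j _.
by rewrite mxE.
Qed.

Lemma LR_comm a j : Lm a *m Rm j = Rm j *m Lm a.
Proof.
apply/matrixP => k i; rewrite !mxE.
have H := assocR a i j k.
under eq_bigr do rewrite !mxE.
under [in RHS]eq_bigr do rewrite !mxE.
rewrite (eq_bigr (fun p => NR i j p * NR a p k)); last first.
  by move=> p _; rewrite mulrC.
by rewrite -H; apply: eq_bigr => p _; rewrite mulrC.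
Qed.

Lemma LL a b : Lm a *m Lm b = \sum_k NR a b k *: Lm k.
Proof.
apply/matrixP => x y; rewrite !mxE summxE.
have H := assocR a b y x.
under eq_bigr do rewrite !mxE.
under [in RHS]eq_bigr do rewrite !mxE.
by rewrite H; apply: eq_bigr => p _; rewrite mulrC.
Qed.

Lemma TL a : Tm *m Lm a = Lm a *m Tm.
Proof.
by rewrite Tm_sum mulmx_suml mulmx_sumr; apply: eq_bigr => j _; rewrite LR_comm.
Qed.

Lemma trLm a : (Lm a)^T = Lm (du a).
Proof. by apply/matrixP => k b; rewrite !mxE /NR N_frob. Qed.

Section Dv.
Variables (lam : R) (v : I -> R).
Hypothesis vpos : forall k, 0 < v k.
Hypothesis veig : forall k, \sum_i Tm k i * v i = lam * v k.

Lemma v_neq0 k : v k != 0. Proof. by rewrite gt_eqF. Qed.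

Lemma perron_uniq (x : I -> R) :
  (forall k, \sum_i Tm k i * x i = lam * x k) ->
  forall k, x k = (x ord0 / v ord0) * v k.
Proof.
move=> xe.
pose k0 := [arg min_(k < ord0) (x k / v k)]%O.
have k0min k : x k0 / v k0 <= x k / v k.
  by rewrite /k0; case: arg_minP => // j _ H; exact: H.
pose c := x k0 / v k0.
have fge0 k : 0 <= x k - c * v k.
  by rewrite subr_ge0 -ler_pdivlMr // k0min.
have fk0 : x k0 - c * v k0 = 0.
  by rewrite /c divfK ?v_neq0 // subrr.
have S0 : \sum_i Tm k0 i * (x i - c * v i) = 0.
  have -> : \sum_i Tm k0 i * (x i - c * v i) =
            \sum_i Tm k0 i * x i - c * \sum_i Tm k0 i * v i.
    by rewrite mulr_sumr -sumrB; apply: eq_bigr => i _; rewrite mulrBr mulrCA.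
  by rewrite xe veig mulrCA -mulrBr fk0 mulr0.
have fz i : x i - c * v i = 0.
  have := @psumr_eq0P _ _ xpredT _ (fun i _ => mulr_ge0 (Tm_ge0 k0 i) (fge0 i)) S0 i isT.
  by move/eqP; rewrite mulf_eq0 gt_eqF ?Tm_pos //= => /eqP.
have xc i : x i = c * v i by apply/eqP; rewrite -subr_eq0 fz.
move=> k; rewrite !xc mulfK ?v_neq0 //.
Qed.


Definition vc : 'cV[R]_m.+1 := \col_k v k.

Lemma veigM : Tm *m vc = lam *: vc.
Proof.
apply/matrixP => k j; rewrite (ord1 j) !mxE -veig; apply: eq_bigr => i _.
by rewrite [vc i 0]mxE.
Qed.

Definition dd a := (Lm a *m vc) ord0 0 / v ord0.

Lemma Lv a : Lm a *m vc = dd a *: vc.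
Proof.
have E : forall k, \sum_i Tm k i * (Lm a *m vc) i 0 = lam * (Lm a *m vc) k 0.
  have HM : Tm *m (Lm a *m vc) = lam *: (Lm a *m vc).
    by rewrite mulmxA TL -mulmxA veigM scalemxAr.
  move=> k; have /matrixP /(_ k 0) := HM.
  by rewrite [(lam *: (Lm a *m vc)) k 0]mxE [(Tm *m _) k 0]mxE.
have := perron_uniq E => U.
apply/matrixP => k j; rewrite (ord1 j) [(dd a *: vc) k 0]mxE U /dd.
by rewrite [vc k 0]mxE.
Qed.

Lemma dd_ge0 a : 0 <= dd a.
Proof.
rewrite /dd divr_ge0 //; last exact: ltW (vpos _).
rewrite mxE; apply: sumr_ge0 => i _.
by rewrite !mxE mulr_ge0 ?NR_ge0 ?ltW.
Qed.

Lemma Lm0 : Lm ord0 = 1%:M.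
Proof. by apply/matrixP => k b; rewrite !mxE /NR fr_unitl eq_sym. Qed.

Lemma dd0 : dd ord0 = 1.
Proof. by rewrite /dd Lm0 mul1mx mxE divff ?v_neq0. Qed.

Lemma dd_char a b : dd a * dd b = \sum_k NR a b k * dd k.
Proof.
have H1 : Lm a *m (Lm b *m vc) = (dd a * dd b) *: vc.
  by rewrite Lv -scalemxAr Lv scalerA mulrC.
have H2 : Lm a *m (Lm b *m vc) = (\sum_k NR a b k * dd k) *: vc.
  rewrite mulmxA LL mulmx_suml scaler_suml; apply: eq_bigr => k _.
  by rewrite -scalemxAl Lv scalerA.
have /matrixP /(_ ord0 0) := etrans (esym H1) H2.
rewrite !mxE => /(mulIf (v_neq0 ord0)) ->.
done.
Qed.

Lemma dd_dual a : dd (du a) = dd a.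
Proof.
have S : 0 < (vc^T *m vc) 0 0.
  rewrite mxE (bigD1 ord0) //= !mxE.
  have h1 : 0 < v ord0 * v ord0 by rewrite mulr_gt0.
  have h2 : 0 <= \sum_(i | i != ord0) vc^T 0 i * vc i 0.
    by apply: sumr_ge0 => i _; rewrite !mxE mulr_ge0 ?ltW.
  lra.
have E1 : vc^T *m (Lm a *m vc) = dd a *: (vc^T *m vc) by rewrite Lv scalemxAr.
have E2 : vc^T *m (Lm a *m vc) = dd (du a) *: (vc^T *m vc).
  have -> : vc^T *m (Lm a *m vc) = (Lm (du a) *m vc)^T *m vc.
    by rewrite trmx_mul trLm duK mulmxA.
  by rewrite Lv linearZ /= -scalemxAl.
have /matrixP /(_ 0 0) := etrans (esym E1) E2.
rewrite ![(_ *: (vc^T *m vc)) 0 0]mxE => /(mulIf (negbT (gt_eqF S))) ->.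
done.
Qed.

Lemma dd_ge1 a : 1 <= dd a.
Proof.
have H := dd_char a (du a).
rewrite dd_dual (bigD1 ord0) //= dd0 {1}/NR fr_rigid duK eqxx mulr1 in H.
have h2 : 0 <= \sum_(i | i != ord0) NR a (du a) i * dd i.
  by apply: sumr_ge0 => i _; rewrite mulr_ge0 ?NR_ge0 ?dd_ge0.
have h3 := dd_ge0 a.
rewrite /= in H.
have h4 : 1 <= dd a * dd a by rewrite H; lra.
case: (lerP 1 (dd a)) => // h5.
have : dd a * dd a < 1 by rewrite -[1]mulr1 ltr_pM.
lra.
Qed.


Lemma Lv_row a k : \sum_l NR a l k * v l = dd a * v k.
Proof.
have /matrixP /(_ k 0) := Lv a.
rewrite [(dd a *: vc) k 0]mxE [vc k 0]mxE mxE => <-; apply: eq_bigr => l _.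
by rewrite !mxE.
Qed.

Lemma Lv_col a l : \sum_k NR a l k * v k = dd a * v l.
Proof.
rewrite -dd_dual -Lv_row; apply: eq_bigr => k _.
by rewrite /NR N_frob.
Qed.

Definition Ar : 'M[R]_m.+1 := \sum_j dd j *: Lm j.
Definition DD : R := \sum_i dd i ^+ 2.

Lemma DD_gt0 : 0 < DD.
Proof.
rewrite /DD (bigD1 ord0) //= dd0 expr1n.
have : 0 <= \sum_(i | i != ord0) dd i ^+ 2 by apply: sumr_ge0 => i _; exact: sqr_ge0.
lra.
Qed.

Lemma Ar_tr : Ar^T = Ar.
Proof.
rewrite /Ar linear_sum /= (reindex_inj (@du_inj _ F)) /=; apply: eq_bigr => j _.
by rewrite linearZ /= trLm duK dd_dual.
Qed.

Lemma inner i : \sum_j dd j *: (Lm i *m Lm j) = dd i *: Ar.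
Proof.
under eq_bigr do rewrite LL scaler_sumr.
rewrite exchange_big /= /Ar scaler_sumr; apply: eq_bigr => k _.
under eq_bigr do rewrite scalerA.
rewrite -scaler_suml scalerA; congr (_ *: _).
rewrite -dd_dual dd_char; apply: eq_bigr => j _.
by rewrite mulrC /NR N_frob.
Qed.

Lemma Ar_sq : Ar *m Ar = DD *: Ar.
Proof.
rewrite {1}/Ar mulmx_suml /DD scaler_suml; apply: eq_bigr => i _.
rewrite -scalemxAl {1}/Ar mulmx_sumr.
under eq_bigr do rewrite -scalemxAr.
by rewrite inner scalerA expr2.
Qed.

End Dv.

End FR2.

End PC.
Import PC.

Module PD.
Set Implicit Arguments. Unset Strict Implicit. Unset Printing Implicit Defensive.

Section Schur.
Variable R : realType.

Lemma sum_prod (I : finType) (f g : I -> R) :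
  \sum_l \sum_k f l * g k = (\sum_l f l) * (\sum_k g k).
Proof.
rewrite mulr_suml; apply: eq_bigr => l _; by rewrite mulr_sumr.
Qed.

Lemma wcs n (a v y : 'I_n -> R) :
  (forall l, 0 <= a l) -> (forall l, 0 < v l) ->
  (\sum_l a l * y l) ^+ 2 <= (\sum_l a l * v l) * (\sum_l a l * y l ^+ 2 / v l).
Proof.
move=> a0 v0.
have P : 0 <= \sum_l \sum_k a l * a k * v l * v k * (y l / v l - y k / v k) ^+ 2.
  apply: sumr_ge0 => l _; apply: sumr_ge0 => k _.
  apply: mulr_ge0; last exact: sqr_ge0.
  by rewrite !mulr_ge0 // ltW.
have E : \sum_l \sum_k a l * a k * v l * v k * (y l / v l - y k / v k) ^+ 2 =
  \sum_l \sum_k (a l * y l ^+ 2 / v l) * (a k * v k)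
  + \sum_l \sum_k (a l * v l) * (a k * y k ^+ 2 / v k)
  - 2 * \sum_l \sum_k (a l * y l) * (a k * y k).
  rewrite mulr_sumr -!big_split -sumrB /=; apply: eq_bigr => l _.
  rewrite mulr_sumr -!big_split -sumrB /=; apply: eq_bigr => k _.
  have := v0 l; have := v0 k => hk hl.
  field; by rewrite ?gt_eqF.
rewrite E !sum_prod in P.
rewrite expr2; lra.
Qed.

Lemma schur n (A : 'I_n -> 'I_n -> R) (v y : 'I_n -> R) (c : R) :
  (forall k l, 0 <= A k l) -> (forall l, 0 < v l) ->
  (forall k, \sum_l A k l * v l = c * v k) ->
  (forall l, \sum_k A k l * v k = c * v l) ->
  \sum_k (\sum_l A k l * y l) ^+ 2 <= c ^+ 2 * \sum_l y l ^+ 2.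
Proof.
move=> A0 v0 row col.
apply: le_trans; first (apply: ler_sum => k _; exact: (wcs y (A0 k) v0)).
under eq_bigr do rewrite row.
have -> : \sum_k c * v k * (\sum_l A k l * y l ^+ 2 / v l) =
          \sum_l (y l ^+ 2 / v l) * c * (\sum_k A k l * v k).
  under eq_bigr do rewrite mulr_sumr.
  rewrite exchange_big /=; apply: eq_bigr => l _.
  rewrite mulr_sumr; apply: eq_bigr => k _; ring.
rewrite mulr_sumr le_eqVlt; apply/orP; left; apply/eqP/eq_bigr => l _.
rewrite col; have := v0 l => hl; field; by rewrite gt_eqF.
Qed.

End Schur.

End PD.
Import PD.

Module PE.
Set Implicit Arguments. Unset Strict Implicit. Unset Printing Implicit Defensive.

Section CX.
Variable R : realType.
Local Notation C := (complex R).
Local Notation toC := (real_complex R).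

Definition nn (z : C) : R := complex.Re z ^+ 2 + complex.Im z ^+ 2.

Lemma nn_ge0 z : 0 <= nn z.
Proof. by rewrite /nn addr_ge0 ?sqr_ge0. Qed.

Lemma normC_nn (z : C) : `|z| = toC (Num.sqrt (nn z)).
Proof. by rewrite normc_def. Qed.

Lemma cvnormE n (c : 'cV[C]_n) : cvnorm c = Num.sqrt (\sum_k nn (c k ord0)).
Proof.
rewrite /cvnorm; congr Num.sqrt.
under eq_bigr do rewrite -add_Re2_Im2.
by rewrite -rmorph_sum.
Qed.

Lemma nn_real x : nn (toC x) = x ^+ 2.
Proof. by rewrite /nn /= expr0n /= addr0. Qed.


Variables (m : nat) (F : fusion_ring m).
Variables (lam : R) (v : 'I_m.+1 -> R).
Hypothesis vpos : forall k, 0 < v k.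
Hypothesis veig : forall k, \sum_i Tm R F k i * v i = lam * v k.

Local Notation dd := (dd F v).
Local Notation NR := (NR R F).

Lemma fmE j (c : 'cV[C]_m.+1) k :
  (fusion_matrix R F j *m c) k 0 = \sum_l toC (NR j l k) * c l 0.
Proof. by rewrite mxE; apply: eq_bigr => l _; rewrite mxE /NR rmorph_nat. Qed.

Lemma opnorm_le j (c : 'cV[C]_m.+1) :
  cvnorm (fusion_matrix R F j *m c) <= dd j * cvnorm c.
Proof.
pose y l := Num.sqrt (nn (c l 0)).
have Yb k : Num.sqrt (nn ((fusion_matrix R F j *m c) k 0)) <= \sum_l NR j l k * y l.
  rewrite -(@lecR R) -normC_nn fmE rmorph_sum.
  apply: le_trans (ler_norm_sum _ _ _) _; apply: ler_sum => l _.
  rewrite normrM (ger0_norm (_ : 0 <= toC (NR j l k))) ?ler0c ?NR_ge0 //.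
  by rewrite normC_nn rmorphM.
have S1 : \sum_k nn ((fusion_matrix R F j *m c) k 0) <=
          \sum_k (\sum_l NR j l k * y l) ^+ 2.
  apply: ler_sum => k _.
  rewrite -[nn _]sqr_sqrtr ?nn_ge0 //.
  by rewrite lerXn2r // ?nnegrE ?sqrtr_ge0 // sumr_ge0 // => l _;
     rewrite mulr_ge0 ?NR_ge0 ?sqrtr_ge0.
have S2 : \sum_k (\sum_l NR j l k * y l) ^+ 2 <= dd j ^+ 2 * \sum_l y l ^+ 2.
  apply: (@schur _ _ (fun k l => NR j l k) v y).
  - by move=> k l; exact: NR_ge0.
  - exact: vpos.
  - by move=> k; have := Lv_row vpos veig j k.
  - by move=> l; have := Lv_col vpos veig j l.
have Ey : \sum_l y l ^+ 2 = \sum_l nn (c l 0).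
  by apply: eq_bigr => l _; rewrite sqr_sqrtr ?nn_ge0.
rewrite !cvnormE -(ger0_norm (dd_ge0 F vpos j)) -sqrtr_sqr -sqrtrM ?sqr_ge0 //.
have Ey' : \sum_l y l ^+ 2 = \sum_k nn (c k ord0) := Ey.
have S1' : \sum_k nn ((fusion_matrix R F j *m c) k ord0) <=
          \sum_k (\sum_l NR j l k * y l) ^+ 2 := S1.
rewrite ler_sqrt; last first.
  by rewrite mulr_ge0 ?sqr_ge0 // sumr_ge0 // => k _; rewrite nn_ge0.
by rewrite -Ey' (le_trans S1' S2).
Qed.


Lemma opnorm_eq j : opnorm (fusion_matrix R F j) = dd j.
Proof.
pose V := \sum_k v k ^+ 2.
have V0 : 0 < V.
  rewrite /V (bigD1 ord0) //=.
  have h1 : 0 < v ord0 ^+ 2 by rewrite exprn_gt0.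
  have h2 : 0 <= \sum_(i | i != ord0) v i ^+ 2 by apply: sumr_ge0 => i _; exact: sqr_ge0.
  lra.
pose s := Num.sqrt V.
have s0 : 0 < s by rewrite sqrtr_gt0.
have S1 : \sum_k (v k / s) ^+ 2 = 1.
  under eq_bigr do rewrite expr_div_n.
  by rewrite -mulr_suml sqr_sqrtr ?ltW // divff ?gt_eqF.
pose c0 : 'cV[C]_m.+1 := \col_k toC (v k / s).
have c0n : cvnorm c0 = 1.
  rewrite cvnormE; under eq_bigr do rewrite mxE nn_real.
  by rewrite S1 sqrtr1.
have ent k : (fusion_matrix R F j *m c0) k 0 = toC (dd j * (v k / s)).
  rewrite fmE; under eq_bigr do rewrite mxE -rmorphM.
  rewrite -rmorph_sum; congr toC.
  rewrite mulrA -(Lv_row vpos veig) mulr_suml; apply: eq_bigr => l _.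
  by rewrite mulrA.
have Mc0 : cvnorm (fusion_matrix R F j *m c0) = dd j.
  rewrite cvnormE; under eq_bigr do rewrite ent nn_real exprMn.
  rewrite -mulr_sumr S1 mulr1 sqrtr_sqr ger0_norm //.
  exact: (dd_ge0 F vpos).
pose E := [set r : R | exists c : 'cV[C]_m.+1,
                           cvnorm c <= 1 /\ r = cvnorm (fusion_matrix R F j *m c)]%classic.
have ub : ubound E (dd j).
  move=> r [c [c1 ->]]; apply: le_trans (opnorm_le j c) _.
  by rewrite ler_piMr ?(dd_ge0 F vpos).
have Ed : E (dd j) by exists c0; rewrite c0n Mc0.
rewrite /opnorm -/E; apply/eqP; rewrite eq_le; apply/andP; split.
  by apply: ge_sup => //; exists (dd j).
by apply: ub_le_sup => //; exists (dd j).
Qed.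

End CX.

End PE.
Import PE.

Module PG.
Set Implicit Arguments. Unset Strict Implicit. Unset Printing Implicit Defensive.

Lemma psd_main (R : realType) (m : nat) (F : fusion_ring m) :
  psd (\sum_(j < m.+1) ((opnorm (fusion_matrix R F j))%:C%C *: fusion_matrix R F j)).
Proof.
have [lam [v [vpos veig]]] := perron_pos R F.
set A := \sum_(j < m.+1) _.
have AE : A = map_mx (real_complex R) (Ar F v).
  apply/matrixP => a b; rewrite /A summxE /Ar mxE summxE rmorph_sum.
  apply: eq_bigr => j _.
  rewrite (opnorm_eq vpos veig) [(_ *: fusion_matrix R F j) a b]mxE [(dd F v j *: Lm R F j) a b]mxE.
  by rewrite [fusion_matrix _ _ _ a b]mxE [Lm _ _ _ a b]mxE (rmorphM _ (dd F v j)) /NR rmorph_nat.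
have At : A^T = A by rewrite AE map_trmx (Ar_tr vpos veig).
have Ac : map_mx Num.conj A = A.
  rewrite AE -map_mx_comp; apply: eq_map_mx => z /=.
  by apply/CrealP; apply/complex_realP; exists z.
have A2 : A *m A = (real_complex R) (DD F v) *: A.
  by rewrite AE -map_mxM (Ar_sq vpos veig) map_mxZ.
move=> x.
set xs := map_mx Num.conj x.
set y := A *m x.
have E1 : xs^T *m A = (map_mx Num.conj y)^T.
  by rewrite /y map_mxM Ac trmx_mul At.
have E2 : (real_complex R) (DD F v) * (xs^T *m A *m x) 0 0 = ((map_mx Num.conj y)^T *m y) 0 0.
  rewrite -E1 /y mulmxA -[xs^T *m A *m A]mulmxA A2 -scalemxAr -scalemxAl.
  by rewrite [((real_complex R) (DD F v) *: (xs^T *m A *m x)) 0 0]mxE.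
have P : 0 <= ((map_mx Num.conj y)^T *m y) 0 0.
  rewrite mxE; apply: sumr_ge0 => k _; rewrite !mxE mulrC; exact: mul_conjC_ge0.
have D0 : 0 < (real_complex R) (DD F v) by rewrite ltcR (DD_gt0 F vpos).
rewrite -E2 in P.
by rewrite -(pmulr_rge0 _ D0).
Qed.

End PG.
Import PG.

Unset Implicit Arguments.
Local Open Scope complex_scope.

Theorem mainTheorem15 (R : realType) (m : nat) (F : fusion_ring m) :
  psd (\sum_(j < m.+1) ((opnorm (fusion_matrix R F j))%:C *: fusion_matrix R F j)).
Proof. exact: psd_main. Qed.
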